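(* Let $n\ge1$ and suppose $\alpha>0$ and $T$ are real constants. Then for $s<t\le T$ and $|x|\le\sqrt{T-t}$, $$\int_{|y|<\sqrt{T-s}}\Phi(x-y,t-s)^{\alpha/n}\,dy\ge\frac{C}{(t-s)^{(\alpha-n)/2}},$$ where $C=C(n,\alpha)$ is a positive constant.
   Context: $\Phi$ is the heat kernel: $\Phi(x,t)=(4\pi t)^{-n/2}e^{-|x|^2/(4t)}$ for $t>0$ and $\Phi(x,t)=0$ for $t\le0$. *)

(* Defs.v *)
From HB Require Import structures.
From mathcomp Require Import all_boot all_order all_algebra.
From mathcomp Require Import all_classical all_reals all_analysis.
Set Implicit Arguments. Unset Strict Implicit. Unset Printing Implicit Defensive.
Import Order.TTheory GRing.Theory Num.Theory.
Import numFieldNormedType.Exports.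
Local Open Scope ring_scope.

(* Euclidean norm on R^n = 'rV[R]_n (the library's norm on 'rV is the sup norm). *)
Definition enorm {R : realType} {n : nat} (x : 'rV[R]_n) : R :=
  Num.sqrt (\sum_(i < n) x ord0 i ^+ 2).

Definition heat_kernel {R : realType} {n : nat} (x : 'rV[R]_n) (t : R) : R :=
  if 0 < t then
    powR (4 * pi * t) (- (n%:R / 2)) * expR (- (enorm x ^+ 2 / (4 * t)))
  else 0.

(* Lebesgue integral over R^k of an (extended-real valued) function of the
   coordinates, defined as the iterated integral w.r.t. the 1-dimensional
   Lebesgue measure (for non-negative measurable integrands this coincides with
   the integral w.r.t. k-dimensional Lebesgue measure, by Tonelli). *)
Fixpoint iter_lebesgue_int {R : realType} (k : nat) (f : seq R -> \bar R) : \bar R :=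
  match k with
  | 0 => f [::]
  | k'.+1 => (\int[@lebesgue_measure R]_(t in setT)
                 iter_lebesgue_int k' (fun v => f (t :: v)))%E
  end.

Definition rV_lebesgue_int {R : realType} (n : nat) (f : 'rV[R]_n -> \bar R) : \bar R :=
  iter_lebesgue_int n (fun s => f (\row_(i < n) nth 0 s i)).

(* Main.v *)
Require Import Defs.
From HB Require Import structures.
From mathcomp Require Import all_boot all_order all_algebra.
From mathcomp Require Import all_classical all_reals all_analysis.
From mathcomp Require Import ring lra.
Import Order.TTheory GRing.Theory Num.Theory.
Import numFieldNormedType.Exports.
Local Open Scope ring_scope.

Section Aux.
Context {R : realType}.
Local Open Scope ereal_scope.

Lemma iter_ge0 k (f : seq R -> \bar R) : (forall s, 0 <= f s) ->
  0 <= iter_lebesgue_int k f.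
Proof.
elim: k f => [|k IH] f f0 /=; first exact: f0.
by apply: integral_ge0 => t _; apply: IH.
Qed.

Lemma iter_le k (f g : seq R -> \bar R) : (forall s, 0 <= f s) ->
  (forall s, f s <= g s) -> iter_lebesgue_int k f <= iter_lebesgue_int k g.
Proof.
elim: k f g => [|k IH] f g f0 fg /=; first exact: fg.
have g0 : forall s, 0 <= g s by move=> s; exact: le_trans (f0 s) (fg s).
rewrite !ge0_integralTE; try by move=> t; apply: iter_ge0.
apply: ereal_sup_le => _ [h hf <-]; exists h => // t.
apply: le_trans (hf t) _; exact: IH.
Qed.

Lemma iter0 k : iter_lebesgue_int k (fun _ : seq R => 0) = 0.
Proof.
elim: k => [//|k IH] /=; rewrite IH; exact: integral0.
Qed.

Fixpoint inbox (h : R) (k : nat) (p : nat -> R) (s : seq R) : bool :=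
  match k with
  | 0%N => true
  | k'.+1 => ((p 0%N - h <= head 0 s <= p 0%N + h)%R &&
              inbox h k' (fun i => p i.+1) (behead s))
  end.

Lemma inboxP h k p s : inbox h k p s ->
  forall i, (i < k)%N -> (p i - h <= nth 0 s i <= p i + h)%R.
Proof.
elim: k p s => [//|k IH] p s /= /andP[H1 H2] [|i] /=.
  by case: s H1 H2.
rewrite ltnS => ik; have := IH _ _ H2 i ik.
by case: s H1 H2 => [|a s] //= _ _; rewrite nth_nil.
Qed.

Lemma iter_box k p (h c : R) : (0 < h)%R -> (0 <= c)%R ->
  iter_lebesgue_int k (fun s => if inbox h k p s then c%:E else 0) =
  (c * (2 * h) ^+ k)%:E.
Proof.
move=> h0 c0; elim: k p => [|k IH] p /=; first by rewrite expr0 mulr1.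
transitivity (\int[@lebesgue_measure R]_(t in setT)
   (if (p 0%N - h <= t <= p 0%N + h)%R then (c * (2 * h) ^+ k)%:E else 0)).
  apply: eq_integral => t _ /=.
  case: ifP => ct /=; first by rewrite IH.
  exact: iter0.
rewrite (_ : (fun t => _) = (cst (c * (2 * h) ^+ k)%:E) \_ [set` `[p 0%N - h, p 0%N + h]%R]); last first.
  apply: funext => t; rewrite patchE; case: ifP => H; case: ifP => H' //.
    by move: H'; rewrite mem_set //= in_itv /= H.
  by move: H' H; rewrite inE /= in_itv /= => ->.
rewrite -integral_mkcond integral_cst; last exact: measurable_itv.
rewrite [X in _ * X](_ : _ = ((p 0%N + h) - (p 0%N - h))%:E); last first.
  have := lebesgue_measure_itv `[p 0%N - h, p 0%N + h]%R.
  rewrite /= lte_fin ifT; last by rewrite ltrD2l; lra.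
  by move=> ->.
rewrite -EFinM; congr EFin; rewrite exprSr; lra.
Qed.


Lemma term_bound1 (lam a dd eps : R) : (0 <= lam)%R -> (0 < eps)%R ->
  ((lam * a + dd) ^+ 2 <= lam ^+ 2 * a ^+ 2 + lam * (eps * a ^+ 2 + dd ^+ 2 / eps) + dd ^+ 2)%R.
Proof.
move=> l0 e0.
have H : (2 * a * dd <= eps * a ^+ 2 + dd ^+ 2 / eps)%R.
  have -> : (eps * a ^+ 2 + dd ^+ 2 / eps = (eps * a - dd) ^+ 2 / eps + 2 * a * dd)%R.
    by field; rewrite gt_eqF.
  by rewrite lerDr divr_ge0 // ?sqr_ge0 // ltW.
move: H; set X := (_ + _ / eps)%R => H; clearbody X.
have := ler_wpM2l l0 H; rewrite sqrrD exprMn mulr2n. move=> HH. rewrite -!addrA lerD2l addrA lerD2r. apply: le_trans HH. rewrite le_eqVlt; apply/orP; left; apply/eqP. ring.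
Qed.

Lemma term_bound2 (lam a dd : R) :
  ((a - (lam * a + dd)) ^+ 2 <= 2 * (1 - lam) ^+ 2 * a ^+ 2 + 2 * dd ^+ 2)%R.
Proof. have := sqr_ge0 ((1 - lam) * a + dd)%R. nra. Qed.

End Aux.

Theorem lemma2p10 (R : realType) (n : nat) (alpha : R) :
  (1 <= n)%N -> 0 < alpha ->
  exists C : R, 0 < C /\
    forall (T s t : R) (x : 'rV[R]_n),
      s < t -> t <= T -> enorm x <= Num.sqrt (T - t) ->
      ((C / powR (t - s) ((alpha - n%:R) / 2))%:E <=
        rV_lebesgue_int (fun y : 'rV[R]_n =>
          if (enorm y < Num.sqrt (T - s))%R
          then (powR (heat_kernel (x - y) (t - s)) (alpha / n%:R))%:E
          else 0%E))%E.
Proof.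
case: n => [//|m] _ alpha0.
set N : R := (m.+1)%:R.
have N0 : 0 < N by rewrite /N ltr0n.
pose C := powR (4 * pi) (- (alpha / 2)) * powR (expR (- (1/4))) (alpha / N)
   / (2 * Num.sqrt N) ^+ m.+1.
exists C; split.
  have p4 : 0 < 4 * pi :> R by rewrite mulr_gt0 ?pi_gt0.
  rewrite /C divr_gt0 ?mulr_gt0 ?powR_gt0 ?expR_gt0 // exprn_gt0 // mulr_gt0 //.
  by rewrite sqrtr_gt0.
move=> T s t x st tT xT.
set tau := t - s.
have tau0 : 0 < tau by rewrite /tau subr_gt0.
set rho := Num.sqrt tau.
have rho0 : 0 < rho by rewrite sqrtr_gt0.
have rho2 : rho ^+ 2 = tau by rewrite sqr_sqrtr // ltW.
set r := enorm x.
have r0 : 0 <= r by exact: sqrtr_ge0.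
have r2 : r ^+ 2 = \sum_(i < m.+1) x ord0 i ^+ 2.
  by rewrite sqr_sqrtr // sumr_ge0 // => i _; exact: sqr_ge0.
have r2T : r ^+ 2 <= T - t.
  have Tt : 0 <= T - t by rewrite subr_ge0.
  by rewrite -(sqr_sqrtr Tt) lerXn2r ?nnegrE ?sqrtr_ge0.
have sN0 : 0 < Num.sqrt N by rewrite sqrtr_gt0.
have sN2 : Num.sqrt N ^+ 2 = N by rewrite sqr_sqrtr // ltW.
pose lam := if r <= rho / 2 then 0 else 1 - rho / (2 * r).
pose eps := if r <= rho / 2 then 1 else rho / (4 * r).
pose h := rho / (4 * Num.sqrt N).
have h0 : 0 < h by rewrite /h divr_gt0 // mulr_gt0.
pose p := fun i : nat => lam * x ord0 (inord i).
pose c := powR (powR (4 * pi * tau) (- (N / 2)) * expR (- (1/4))) (alpha / N).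
have key : forall s0 : seq R, inbox h m.+1 p s0 ->
   (enorm (\row_(i < m.+1) nth 0 s0 i) < Num.sqrt (T - s)) /\
   c <= powR (heat_kernel (x - \row_(i < m.+1) nth 0 s0 i) tau) (alpha / N).
  move=> s0 hb; set y := \row_(i < m.+1) nth 0 s0 i.
  have hb' := @inboxP R h m.+1 p s0 hb.
  pose d i := y ord0 i - lam * x ord0 i.
  have dh : forall i : 'I_m.+1, d i ^+ 2 <= h ^+ 2.
    move=> i; have /andP[a b] := hb' i (ltn_ord i).
    move: a b; rewrite /d /y mxE /p inord_val => a b; nra.
  set D := \sum_(i < m.+1) d i ^+ 2.
  have D0 : 0 <= D by rewrite sumr_ge0 // => i _; exact: sqr_ge0.
  have Dle : D <= tau / 16.
    apply: le_trans (ler_sum _ (fun i _ => dh i)) _.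
    rewrite sumr_const card_ord -mulr_natl.
    rewrite le_eqVlt; apply/orP; left; apply/eqP.
    rewrite /h expr_div_n exprMn sN2 rho2 -/N; field; rewrite gt_eqF //.
  have lam0 : 0 <= lam.
    rewrite /lam; case: ifP => // /negbT; rewrite -ltNge => rr.
    rewrite subr_ge0 ler_pdivrMr; last by rewrite mulr_gt0 // (lt_trans _ rr) // divr_gt0.
    lra.
  have eps0 : 0 < eps.
    rewrite /eps; case: ifP => // /negbT; rewrite -ltNge => rr.
    by rewrite divr_gt0 // mulr_gt0 // (lt_trans _ rr) // divr_gt0.
  have yE : forall i, y ord0 i = lam * x ord0 i + d i.
    by move=> i; rewrite /d; ring.
  have S1 : \sum_(i < m.+1) y ord0 i ^+ 2 <=
            lam ^+ 2 * r ^+ 2 + lam * (eps * r ^+ 2 + D / eps) + D.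
    under eq_bigr do rewrite yE.
    apply: le_trans (ler_sum _ (fun i _ => @term_bound1 R lam (x ord0 i) (d i) eps lam0 eps0)) _.
    by rewrite r2 /D !big_split /= -mulr_sumr -mulr_sumr big_split /= -mulr_sumr -mulr_suml.
  have S2 : \sum_(i < m.+1) (x ord0 i - y ord0 i) ^+ 2 <=
            2 * (1 - lam) ^+ 2 * r ^+ 2 + 2 * D.
    under eq_bigr do rewrite yE.
    apply: le_trans (ler_sum _ (fun i _ => term_bound2 lam (x ord0 i) (d i))) _.
    by rewrite r2 /D big_split /= -!mulr_sumr.
  have Ts : 0 < T - s by rewrite subr_gt0 (lt_le_trans st tT).
  have rrho : 0 <= r * rho by rewrite mulr_ge0 // ltW.
  have key2 : \sum_(i < m.+1) y ord0 i ^+ 2 < T - s /\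
              \sum_(i < m.+1) (x ord0 i - y ord0 i) ^+ 2 <= tau.
    case: (lerP r (rho / 2)) => rr.
      have L0 : lam = 0 by rewrite /lam rr.
      have E0 : eps = 1 by rewrite /eps rr.
      rewrite L0 E0 in S1 S2.
      have rr2 : r ^+ 2 <= (rho / 2) ^+ 2 by rewrite lerXn2r // nnegrE divr_ge0 // ltW.
      move: rr2; rewrite expr_div_n rho2 => rr2.
      rewrite /tau in rho2 Dle rr2 S2 *.
      split; lra.
    have L0 : lam = 1 - rho / (2 * r) by rewrite /lam leNgt rr.
    have E0 : eps = rho / (4 * r) by rewrite /eps leNgt rr.
    have r0' : 0 < r by rewrite (lt_trans _ rr) // divr_gt0.
    have Lr : lam * r = r - rho / 2 by rewrite L0; field; rewrite gt_eqF.
    have Lr' : (1 - lam) * r = rho / 2 by rewrite L0; field; rewrite gt_eqF.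
    have e1 : eps * r ^+ 2 = rho * r / 4 by rewrite E0; field; rewrite gt_eqF.
    have e2 : D / eps <= rho * r / 4.
      rewrite E0 (_ : D / (rho / (4 * r)) = D * (4 * r / rho)); last first.
        by field; rewrite !gt_eqF.
      apply: le_trans (_ : tau / 16 * (4 * r / rho) <= _).
        by rewrite ler_wpM2r // divr_ge0 // ?mulr_ge0 // ltW.
      rewrite -rho2 le_eqVlt; apply/orP; left; apply/eqP; field.
      by rewrite ?(gt_eqF rho0) ?(gt_eqF r0').
    have H1 : lam ^+ 2 * r ^+ 2 = (r - rho / 2) ^+ 2 by rewrite -exprMn Lr.
    have H2 : lam * (rho * r / 4) = (r - rho / 2) * rho / 4 by rewrite -Lr; ring.
    have H3 := ler_wpM2l lam0 e2; rewrite H2 in H3.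
    have H4 : (1 - lam) ^+ 2 * r ^+ 2 = (rho / 2) ^+ 2 by rewrite -exprMn Lr'.
    rewrite e1 mulrDr H1 H2 in S1.
    rewrite -mulrA H4 in S2.
    rewrite /tau in rho2 Dle S2 *.
    split; nra.
  have [K1 K2] := key2.
  split; first by rewrite /enorm ltr_sqrt.
  have En : enorm (x - y) ^+ 2 <= tau.
    rewrite /enorm sqr_sqrtr; last by rewrite sumr_ge0 // => i _; exact: sqr_ge0.
    under eq_bigr do rewrite !mxE.
    apply: le_trans K2; rewrite le_eqVlt; apply/orP; left; apply/eqP.
    by apply: eq_bigr => i _; rewrite /y !mxE.
  rewrite /heat_kernel tau0 /c.
  have p4 : 0 < 4 * pi * tau by rewrite !mulr_gt0 ?pi_gt0.
  apply: ge0_ler_powR; rewrite ?nnegrE.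
  - by rewrite divr_ge0 // ltW.
  - by rewrite mulr_ge0 ?powR_ge0 ?expR_ge0.
  - by rewrite mulr_ge0 ?powR_ge0 ?expR_ge0.
  rewrite ler_pM2l ?powR_gt0 // ler_expR lerN2 ler_pdivrMr ?mulr_gt0 //.
  lra.
apply: (@le_trans _ _ (c * (2 * h) ^+ m.+1)%:E).
  rewrite lee_fin le_eqVlt; apply/orP; left; apply/eqP.
  have p4 : 0 <= 4 * pi :> R by rewrite mulr_ge0 ?pi_ge0.
  have E1 : c = powR (4 * pi) (- (alpha / 2)) * powR tau (- (alpha / 2))
                * powR (expR (- (1/4))) (alpha / N).
    rewrite /c powRM ?powR_ge0 ?expR_ge0 // -powRrM.
    rewrite (_ : - (N / 2) * (alpha / N) = - (alpha / 2)); last first.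
      by field; rewrite gt_eqF.
    by rewrite powRM // ltW.
  have E2 : (2 * h) ^+ m.+1 = powR tau (N / 2) / (2 * Num.sqrt N) ^+ m.+1.
    rewrite (_ : 2 * h = rho / (2 * Num.sqrt N)); last first.
      by rewrite /h; field; rewrite gt_eqF.
    rewrite expr_div_n; congr (_ / _).
    rewrite /rho -powR12_sqrt ?ltW // -powR_mulrn ?powR_ge0 // -powRrM.
    by rewrite /N; congr powR; field.
  have E3 : (powR tau ((alpha - N) / 2))^-1 = powR tau (- (alpha / 2)) * powR tau (N / 2).
    rewrite -powRN -powRD; last by rewrite (gt_eqF tau0) implybT.
    by congr powR; field.
  rewrite E1 E2 /C mulrAC E3; ring.
rewrite /rV_lebesgue_int -(iter_box m.+1 p h c h0 (powR_ge0 _ _)).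
apply: iter_le => s0; first by case: ifP; rewrite // lee_fin powR_ge0.
case: (boolP (inbox h m.+1 p s0)) => hb; last by case: ifP; rewrite // lee_fin powR_ge0.
have [k1 k2] := key s0 hb.
by rewrite k1 lee_fin.
Qed.
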